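(* Let $N\ge2$ and let $H\in M_{(N-1)\times N}(\mathbb T)$ be partial Hadamard. For $j=1,\ldots,N$ let $H^{(j)}\in M_{N-1}(\mathbb C)$ be obtained from $H$ by removing its $j$-th column. The following are equivalent: (1) $H$ can be completed (by adding an $N$-th row) to an $N\times N$ complex Hadamard matrix; (2) $|\det H^{(j)}|$ is independent of $j$; (3) $|\det H^{(j)}|=N^{N/2-1}$ for every $j$. If so, a completion is obtained by setting $H_{Nj}=(-1)^jN^{1-N/2}\,\overline{\det H^{(j)}}$.
   Context: $\mathbb T$ is the unit circle. A partial Hadamard matrix is a matrix with entries in $\mathbb T$ whose rows are pairwise orthogonal; an $N\times N$ complex Hadamard matrix is a partial Hadamard matrix in $M_N(\mathbb T)$. *)

(* Defs.v *)
From HB Require Import structures.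
From mathcomp Require Import all_boot all_order all_algebra.
From mathcomp Require Import reals.
From mathcomp Require Import complex.
Set Implicit Arguments. Unset Strict Implicit. Unset Printing Implicit Defensive.
Import Order.TTheory GRing.Theory Num.Theory.
Local Open Scope ring_scope.

Definition in_T (C : numClosedFieldType) (z : C) : Prop := `|z| = 1.

Definition partial_hadamard (C : numClosedFieldType) (m n : nat)
  (M : 'M[C]_(m, n)) : Prop :=
  (forall i j, in_T (M i j)) /\
  (forall i i', i != i' -> \sum_k M i k * (M i' k)^* = 0).

(* Main.v *)
Require Import Defs.
From HB Require Import structures.
From mathcomp Require Import all_boot all_order all_algebra.
From mathcomp Require Import reals.
From mathcomp Require Import complex.
From mathcomp Require Import ring.
Set Implicit Arguments. Unset Strict Implicit. Unset Printing Implicit Defensive.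
Import Order.TTheory GRing.Theory Num.Theory.
Local Open Scope ring_scope.

Lemma conj_sum_swap (C : numClosedFieldType) (I : finType) (F G : I -> C) :
  \sum_k G k * (F k)^* = (\sum_k F k * (G k)^*)^*.
Proof.
rewrite rmorph_sum; apply: eq_bigr => k _.
by rewrite rmorphM /= conjCK mulrC.
Qed.

Lemma ph_col_mx (C : numClosedFieldType) m1 m2 n (A : 'M[C]_(m1,n))
  (B : 'M[C]_(m2,n)) :
  partial_hadamard (col_mx A B) <->
  [/\ partial_hadamard A, partial_hadamard B &
      forall i i', \sum_k A i k * (B i' k)^* = 0].
Proof.
split.
- case=> hT hO; split.
  + split=> [i j|i i' ne]; first by have := hT (lshift m2 i) j; rewrite col_mxEu.
    have := hO (lshift m2 i) (lshift m2 i').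
    rewrite (inj_eq (@lshift_inj _ _)) => /(_ ne).
    by under eq_bigr do rewrite !col_mxEu.
  + split=> [i j|i i' ne]; first by have := hT (rshift m1 i) j; rewrite col_mxEd.
    have := hO (rshift m1 i) (rshift m1 i').
    rewrite (inj_eq (@rshift_inj _ _)) => /(_ ne).
    by under eq_bigr do rewrite !col_mxEd.
  + move=> i i'; have := hO (lshift m2 i) (rshift m1 i').
    rewrite eq_lrshift => /(_ isT).
    by under eq_bigr do rewrite col_mxEu col_mxEd.
- case=> [[hAT hAO] [hBT hBO] hAB]; split.
  + move=> i j; rewrite -(splitK i); case: (split i) => a /=; by rewrite ?col_mxEu ?col_mxEd.
  + move=> i i'; rewrite -(splitK i) -(splitK i').
    case: (split i) => a; case: (split i') => b /= ne.
    * under eq_bigr do rewrite !col_mxEu; apply: hAO.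
      by apply: contraNneq ne => ->.
    * by under eq_bigr do rewrite col_mxEu col_mxEd; apply: hAB.
    * under eq_bigr do rewrite col_mxEu col_mxEd.
      by rewrite (conj_sum_swap (fun k => A b k)) hAB rmorph0.
    * under eq_bigr do rewrite !col_mxEd; apply: hBO.
      by apply: contraNneq ne => ->.
Qed.

Definition adjm (C : numClosedFieldType) m n (A : 'M[C]_(m,n)) : 'M[C]_(n,m) :=
  (map_mx Num.conj A)^T.

Lemma ph_gram (C : numClosedFieldType) m n (H : 'M[C]_(m,n)) :
  partial_hadamard H -> H *m adjm H = (n%:R : C)%:M.
Proof.
case=> hT hO; apply/matrixP=> i i'; rewrite !mxE.
under eq_bigr do rewrite !mxE.
have [<-|ne] := eqVneq i i'; last by rewrite hO.
under eq_bigr do rewrite -normCK (hT i _) expr1n.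
by rewrite sumr_const card_ord.
Qed.

Lemma colmx0 (C : Type) n (x : 'rV[C]_n.+1) (H : 'M[C]_(n, n.+1)) j :
  (col_mx x H : 'M_n.+1) 0 j = x 0 j.
Proof.
have -> : (0 : 'I_n.+1) = lshift n (0 : 'I_1) by apply: val_inj.
exact: (col_mxEu x H).
Qed.

Lemma colmxS (C : Type) n (x : 'rV[C]_n.+1) (H : 'M[C]_(n, n.+1)) a j :
  (col_mx x H : 'M_n.+1) (lift 0 a) j = H a j.
Proof.
have -> : lift (0 : 'I_n.+1) a = rshift 1 a by apply: val_inj.
exact: (col_mxEd x H).
Qed.

Lemma row'_col_mx (C : numClosedFieldType) n (x : 'rV[C]_n.+1)
  (H : 'M[C]_(n, n.+1)) (j : 'I_n.+1) :
  row' 0 (col' j (col_mx x H : 'M_n.+1)) = col' j H.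
Proof.
apply/matrixP=> a b; set K := col_mx x H; rewrite !mxE /K.
have -> : lift (0 : 'I_n.+1) a = rshift 1 a by apply: val_inj.
by rewrite (unsplitK (inr _ a)).
Qed.

Lemma det_col_mx (C : numClosedFieldType) n (x : 'rV[C]_n.+1)
  (H : 'M[C]_(n, n.+1)) :
  \det (col_mx x H : 'M_n.+1) =
  \sum_j x 0 j * ((-1) ^+ j * \det (col' j H)).
Proof.
rewrite (expand_det_row _ 0); apply: eq_bigr => j _.
rewrite /cofactor row'_col_mx add0n.
have -> : (0 : 'I_n.+1) = lshift n (0 : 'I_1) by apply: val_inj.
by congr (_ * _); exact: (col_mxEu x H).
Qed.

Lemma cof_orth (C : numClosedFieldType) n (H : 'M[C]_(n, n.+1)) (i : 'I_n) :
  \sum_j H i j * ((-1) ^+ j * \det (col' j H)) = 0.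
Proof.
have := det_col_mx (row i H) H.
rewrite (@determinant_alternate _ _ _ 0 (lift 0 i)); last first.
- by move=> k; rewrite colmx0 colmxS mxE.
- exact: neq_lift.
move=> h; rewrite [RHS]h; apply: eq_bigr => j _; by rewrite mxE.
Qed.

Lemma adjmM (C : numClosedFieldType) m n p (A : 'M[C]_(m,n)) (B : 'M[C]_(n,p)) :
  adjm (A *m B) = adjm B *m adjm A.
Proof. by rewrite /adjm map_mxM trmx_mul. Qed.

Lemma adjmK (C : numClosedFieldType) m n (A : 'M[C]_(m,n)) : adjm (adjm A) = A.
Proof. by apply/matrixP=> i j; rewrite !mxE conjCK. Qed.

Lemma adjm0 (C : numClosedFieldType) m n : adjm (0 : 'M[C]_(m,n)) = 0.
Proof. by apply/matrixP=> i j; rewrite !mxE rmorph0. Qed.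

Lemma det_adjm (C : numClosedFieldType) n (A : 'M[C]_n) :
  \det (adjm A) = (\det A)^*.
Proof. by rewrite /adjm det_tr det_map_mx. Qed.

Lemma det_norm (C : numClosedFieldType) n (x : 'rV[C]_n.+1)
  (H : 'M[C]_(n, n.+1)) :
  partial_hadamard H -> H *m adjm x = 0 ->
  `|\det (col_mx x H : 'M_n.+1)| ^+ 2 = (x *m adjm x) 0 0 * (n.+1)%:R ^+ n.
Proof.
move=> hH hx.
have hx' : x *m adjm H = 0 by rewrite -[x]adjmK -adjmM hx adjm0.
rewrite normCK -det_adjm -det_mulmx.
have -> : adjm (col_mx x H) = row_mx (adjm x) (adjm H).
  by rewrite /adjm map_col_mx tr_col_mx.
have e : (col_mx x H *m row_mx (adjm x) (adjm H) : 'M_n.+1) =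
  block_mx (x *m adjm x) (x *m adjm H) (H *m adjm x) (H *m adjm H).
  exact: (@mul_col_row C 1 n n.+1 1 n x H (adjm x) (adjm H)).
rewrite e hx hx' (ph_gram hH).
have := det_ublock (x *m adjm x) 0 ((n.+1)%:R%:M : 'M[C]_n).
rewrite det_mx11 det_scalar => <-.
by [].
Qed.

Lemma detK_norm (C : numClosedFieldType) n (K : 'M[C]_n.+1) :
  partial_hadamard K -> `|\det K| = sqrtC (n.+1)%:R ^+ n.+1.
Proof.
move=> hK.
have e : `|\det K| ^+ 2 = (sqrtC (n.+1)%:R ^+ n.+1) ^+ 2.
  rewrite normCK -det_adjm -det_mulmx (ph_gram hK) det_scalar.
  by rewrite -exprM mulnC exprM sqrtCK.
apply/eqP; rewrite -(@eqrXn2 _ 2) //; first by rewrite e.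
by rewrite exprn_ge0 // sqrtC_ge0 ler0n.
Qed.

Lemma cof_entry (C : numClosedFieldType) n (x : 'rV[C]_n.+1)
  (H : 'M[C]_(n, n.+1)) j :
  \adj (col_mx x H : 'M_n.+1) j 0 = (-1) ^+ j * \det (col' j H).
Proof. by rewrite mxE /cofactor row'_col_mx add0n. Qed.

Lemma cof0 (C : numClosedFieldType) n (x : 'rV[C]_n.+1)
  (H : 'M[C]_(n, n.+1)) j :
  cofactor (col_mx x H : 'M_n.+1) 0 j = (-1) ^+ j * \det (col' j H).
Proof. by rewrite /cofactor row'_col_mx add0n. Qed.

Lemma adjmE (C : numClosedFieldType) m n (A : 'M[C]_(m,n)) i j :
  adjm A i j = (A j i)^*.
Proof. by rewrite !mxE. Qed.

Lemma p1_p3 (C : numClosedFieldType) n (H : 'M[C]_(n, n.+1))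
  (r : 'rV[C]_n.+1) : (0 < n)%N ->
  partial_hadamard (col_mx r H : 'M_n.+1) ->
  forall j, `|\det (col' j H)| = sqrtC (n.+1)%:R ^+ n.-1.
Proof.
move=> n0 hK j.
have hK' := hK.
case: hK' => hT _.
set K := (col_mx r H : 'M_n.+1) in hK hT *.
have e1 : (\det K)%:M *m adjm K = (n.+1)%:R *: \adj K.
  by rewrite -mul_adj_mx -mulmxA (ph_gram hK) mul_mx_scalar.
have := congr1 (fun M : 'M[C]_n.+1 => M j 0) e1.
rewrite mul_scalar_mx [LHS]mxE [RHS]mxE adjmE [X in _ = _ * X]mxE cof0.
move/(congr1 (fun z => `|z|)).
rewrite !normrM norm_conjC (hT 0 j) mulr1 normrX normrN1 expr1n mul1r normr_nat.
rewrite (detK_norm hK) => e.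
have ee : sqrtC (n.+1)%:R ^+ n.+1 = sqrtC (n.+1)%:R ^+ 2 * sqrtC (n.+1)%:R ^+ n.-1 :> C.
  by rewrite -exprD add2n (prednK n0).
rewrite ee sqrtCK in e.
have nz : (n.+1)%:R != 0 :> C by rewrite pnatr_eq0.
by rewrite (mulfI nz e).
Qed.

Lemma exists_orth (C : numClosedFieldType) n (H : 'M[C]_(n, n.+1)) :
  partial_hadamard H ->
  exists x : 'rV[C]_n.+1, H *m adjm x = 0 /\ (x *m adjm x) 0 0 != 0.
Proof.
move=> hH.
set N : C := (n.+1)%:R.
have nz : N != 0 by rewrite pnatr_eq0.
set P : 'M[C]_n.+1 := 1%:M - N^-1 *: (adjm H *m H).
have HP : H *m P = 0.
  rewrite /P mulmxBr mulmx1 -scalemxAr mulmxA (ph_gram hH) mul_scalar_mx.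
  by rewrite scalerA mulVf // scale1r subrr.
exists (adjm (P *m delta_mx 0 0)); rewrite adjmK; split.
  by rewrite mulmxA HP mul0mx.
have P00 : P 0 0 != 0.
  rewrite /P !mxE eqxx mulr1n.
  under eq_bigr do rewrite !mxE mulrC -normCK (hH.1 _ 0) expr1n.
  rewrite sumr_const card_ord.
  apply/eqP => h.
  have : N * (1 - N^-1 * n%:R) = 1.
    rewrite mulrBr mulr1 mulrA mulfV // mul1r /N -natrB //.
    by rewrite subSn // subnn.
  by rewrite h mulr0 => /eqP; rewrite eq_sym oner_eq0.
clearbody P.
rewrite -colE mxE; apply/eqP => h.
have h2 : \sum_k `|P k 0| ^+ 2 = 0.
  by rewrite -[RHS]h; apply: eq_bigr => k _; rewrite normCK !mxE mulrC.
have := psumr_eq0P (fun k _ => exprn_ge0 2 (normr_ge0 (P k 0))) h2 (i:=0) isT.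
by move/eqP; rewrite expf_eq0 normr_eq0 (negbTE P00) andbF.
Qed.

Lemma sign_sq (C : numClosedFieldType) (j : nat) : (-1) ^+ j * (-1) ^+ j = 1 :> C.
Proof. by rewrite -exprMn mulrNN mulr1 expr1n. Qed.

Lemma p2_p3 (C : numClosedFieldType) n (H : 'M[C]_(n, n.+1)) (c : C) :
  (0 < n)%N -> partial_hadamard H ->
  (forall j, `|\det (col' j H)| = c) -> c = sqrtC (n.+1)%:R ^+ n.-1.
Proof.
move=> n0 hH hc.
set N : C := (n.+1)%:R.
have nz : N != 0 by rewrite pnatr_eq0.
have c0 : 0 <= c by rewrite -(hc 0) normr_ge0.
have cnz : c != 0.
  apply/eqP => c00.
  have [x [hx hxx]] := exists_orth hH.
  have := det_norm hH hx; rewrite det_col_mx.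
  rewrite big1 ?normr0 ?expr0n /=; last first.
    by move=> j _; have /eqP := hc j; rewrite c00 normr_eq0 => /eqP ->; rewrite !mulr0.
  move/esym/eqP; rewrite mulf_eq0 (negbTE hxx) /= expf_eq0 pnatr_eq0 andbF.
  by [].
set w : 'rV[C]_n.+1 := \row_j ((-1) ^+ j * (\det (col' j H))^*).
have hw : H *m adjm w = 0.
  apply/matrixP => i a; rewrite !mxE -[RHS](cof_orth H i).
  apply: eq_bigr => k _; rewrite !mxE rmorphM rmorphXn rmorphN1 /= conjCK.
  by [].
have dw : \det (col_mx w H : 'M_n.+1) = N * c ^+ 2.
  rewrite det_col_mx; under eq_bigr do rewrite mxE mulrACA sign_sq mul1r mulrC -normCK hc.
  by rewrite sumr_const card_ord -mulr_natl.
have ww : (w *m adjm w) 0 0 = N * c ^+ 2.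
  rewrite mxE; under eq_bigr do rewrite adjmE -normCK mxE normrM normrX normrN1 expr1n mul1r norm_conjC hc.
  by rewrite sumr_const card_ord -mulr_natl.
have := det_norm hH hw; rewrite dw ww.
have Nc0 : 0 <= N * c ^+ 2 by rewrite mulr_ge0 ?ler0n ?exprn_ge0.
rewrite ger0_norm // expr2 => /(mulfI _).
have Nc : N * c ^+ 2 != 0 by rewrite mulf_neq0 // expf_neq0.
move=> /(_ Nc) e.
have e2 : c ^+ 2 = (sqrtC N ^+ n.-1) ^+ 2.
  rewrite -exprM mulnC exprM sqrtCK.
  apply: (mulfI nz); rewrite e -exprS prednK //.
apply/eqP; rewrite -(@eqrXn2 _ 2) // ?e2 //.
by rewrite exprn_ge0 // sqrtC_ge0 ler0n.
Qed.

Lemma p3_r0 (C : numClosedFieldType) n (H : 'M[C]_(n, n.+1)) (s : C) e :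
  partial_hadamard H -> 0 < s ->
  (forall j, `|\det (col' j H)| = s ^+ e) ->
  partial_hadamard (col_mx H
    (\row_(j < n.+1) ((-1) ^+ j.+1 * s ^- e * (\det (col' j H))^*))).
Proof.
move=> hH s0 hd; apply/ph_col_mx; split=> //.
- split=> [i j|i i']; last by rewrite !ord1 eqxx.
  rewrite /in_T mxE !normrM normrX normrN1 expr1n mul1r norm_conjC hd.
  rewrite normfV normrX ger0_norm ?ltW // mulVf //.
  by rewrite expf_neq0 // gt_eqF.
- move=> i i'.
  have sr : (s ^- e)^* = s ^- e.
    by apply: conj_Creal; rewrite ger0_real // invr_ge0 exprn_ge0 // ltW.
  rewrite (eq_bigr (fun k => - s ^- e * (H i k * ((-1) ^+ k * \det (col' k H))))).
    by rewrite -mulr_sumr cof_orth mulr0.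
  move=> k _; rewrite mxE !rmorphM rmorphXn rmorphN1 /= conjCK sr exprS.
  ring.
Qed.


Lemma ph_swap (C : numClosedFieldType) n (H : 'M[C]_(n, n.+1)) (r : 'rV[C]_n.+1) :
  partial_hadamard (col_mx H r) -> partial_hadamard (col_mx r H : 'M_n.+1).
Proof.
move=> hr0; have [hH' hr horth] := (ph_col_mx H r).1 hr0.
apply/(@ph_col_mx C 1 n n.+1 r H); split=> // i i'.
by rewrite (conj_sum_swap (fun k => H i' k)) horth rmorph0.
Qed.

Local Open Scope complex_scope.

Theorem proposition3p1 (R : realType) (N : nat) (hN : (2 <= N)%N)
  (H : 'M[R[i]]_(N.-1, N)) (hH : partial_hadamard H) :
  let P1 := exists r : 'rV[R[i]]_N, partial_hadamard (col_mx H r) in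
  let P2 := exists c : R[i], forall j : 'I_N, `|\det (col' j H)| = c in
  let P3 := forall j : 'I_N,
      `|\det (col' j H)| = sqrtC (N%:R : R[i]) ^+ (N - 2) in
  let r0 := \row_(j < N) ((-1) ^+ j.+1 * sqrtC (N%:R : R[i]) ^- (N - 2)
                            * (\det (col' j H))^*) in
  [/\ P1 <-> P2, P2 <-> P3 & P1 -> partial_hadamard (col_mx H r0)].
Proof.
case: N hN H hH => [|n] // hN H hH P1 P2 P3 r0.
have n0 : (0 < n)%N by [].
have e2 : (n.+1 - 2)%N = n.-1 by rewrite subSS subn1.
have s0 : 0 < sqrtC ((n.+1)%:R : R[i]) by rewrite sqrtC_gt0 ltr0n.
have p13 : P1 -> P3.
  case=> r hr0 j; rewrite e2.
  exact: (p1_p3 n0 (ph_swap hr0)).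
have p3r : P3 -> partial_hadamard (col_mx H r0).
  by move=> h3; apply: p3_r0.
have p23 : P2 -> P3.
  by case=> c hc j; rewrite hc e2; apply: (p2_p3 n0 hH hc).
have p32 : P3 -> P2 by move=> h; exists (sqrtC ((n.+1)%:R : R[i]) ^+ (n.+1 - 2)).
split.
- split=> [/p13/p32 //|/p23 h]; exists r0; exact: p3r.
- by split.
- by move=> /p13.
Qed.
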